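(* Let $(\mathfrak{g},\langle\cdot,\cdot\rangle_{\mathfrak{g}})$ be an abelian quadratic Lie algebra (i.e. an abelian Lie algebra with a nondegenerate symmetric bilinear form) and let $A\in\mathfrak{so}(\mathfrak{g},\langle\cdot,\cdot\rangle_{\mathfrak{g}})$ be non-nilpotent. Let $\delta_A(\mathfrak{g})=\mathbb{R}e\oplus\mathfrak{g}\oplus\mathbb{R}\bar e$ be the double extension of $\mathfrak{g}$ by $A$, and let $(\mathfrak{a},\langle\cdot,\cdot\rangle_{\mathfrak{a}})$ be an abelian quadratic Lie algebra. Consider the product quadratic Lie algebra $\delta_A(\mathfrak{g})\oplus\mathfrak{a}$ (direct sum of Lie algebras, orthogonal direct sum of the forms). Then every derivation $D$ of $\delta_A(\mathfrak{g})\oplus\mathfrak{a}$ that is skew-symmetric with respect to the quadratic form satisfies $D(e)=0$. In particular, $\delta_A(\mathfrak{g})\oplus\mathfrak{a}$ admits no $k$-symplectic structure for any $k\ge1$.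
   Context: The double extension of a quadratic Lie algebra $(\mathfrak{g},[\cdot,\cdot]_{\mathfrak{g}},\langle\cdot,\cdot\rangle_{\mathfrak{g}})$ by a skew-symmetric endomorphism $A$ is the vector space $\delta_A(\mathfrak{g})=\mathbb{R}e\oplus\mathfrak{g}\oplus\mathbb{R}\bar e$ with nonvanishing brackets $[\bar e,u]=Au$ and $[u,v]=\langle Au,v\rangle_{\mathfrak{g}}\,e+[u,v]_{\mathfrak{g}}$ for $u,v\in\mathfrak{g}$ ($e$ central), and quadratic form $\langle xe+u+\bar x\bar e,\,xe+u+\bar x\bar e\rangle=2x\bar x+\langle u,u\rangle_{\mathfrak{g}}$. A quadratic Lie algebra is a real Lie algebra with a nondegenerate invariant symmetric bilinear form ($\langle[u,v],w\rangle+\langle[u,w],v\rangle=0$). A $k$-symplectic structure on a real Lie algebra $\mathfrak{k}$ of dimension $n(k+1)$ ($n,k\ge1$) is a pair consisting of a Lie subalgebra $\mathfrak{h}\subset\mathfrak{k}$ of dimension $nk$ and a family $(\theta_1,\dots,\theta_k)$ of skew-symmetric bilinear forms on $\mathfrak{k}$ such that: (i) $\bigcap_{i=1}^k\ker\theta_i=\{0\}$, where $\ker\theta_i=\{u:\theta_i(u,v)=0\ \forall v\}$; (ii) each $\theta_i$ is a 2-cocycle: $\theta_i([u,v],w)+\theta_i([v,w],u)+\theta_i([w,u],v)=0$ for all $u,v,w$; (iii) $\theta_i(u,v)=0$ for all $u,v\in\mathfrak{h}$ and all $i$. *)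

(* Defs.v *)
From mathcomp Require Import all_boot all_order all_algebra.
From mathcomp Require Import reals.
Set Implicit Arguments. Unset Strict Implicit. Unset Printing Implicit Defensive.
Import Order.TTheory GRing.Theory Num.Theory.
Local Open Scope ring_scope.

(* Vectors of g (resp. a) are row vectors 'rV[R]_n; the quadratic form is
   given by a Gram matrix B: <u,v> = u B v^T. Endomorphisms act on the right:
   A u := u *m A. *)
Definition bform (R : realType) (n : nat) (B : 'M[R]_n) (u v : 'rV[R]_n) : R :=
  (u *m B *m v^T) 0 0.

Definition quad_mx (R : realType) (n : nat) (B : 'M[R]_n) : Prop :=
  B^T = B /\ B \in unitmx.

Definition so_mx (R : realType) (n : nat) (B A : 'M[R]_n) : Prop :=
  forall u v : 'rV[R]_n, bform B (u *m A) v + bform B u (v *m A) = 0.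

(* Underlying space of delta_A(g) (+) a: elements (((x, u), xb), w) stand for
   x e + u + xb ebar + w. *)
Definition DEA (R : realType) (n m : nat) :=
  (R^o * 'rV[R]_n * R^o * 'rV[R]_m)%type.

Definition de_e (R : realType) (n m : nat) : DEA R n m := (1, 0, 0, 0).

Definition dbr (R : realType) (n m : nat) (B A : 'M[R]_n)
  (p q : DEA R n m) : DEA R n m :=
  (bform B (p.1.1.2 *m A) q.1.1.2,
   p.1.2 *: (q.1.1.2 *m A) - q.1.2 *: (p.1.1.2 *m A), 0, 0).

(* Symmetric bilinear form of delta_A(g) (+) a (polarization of
   2 x xb + <u,u>_g + <w,w>_a). *)
Definition dform (R : realType) (n m : nat) (B : 'M[R]_n) (Ba : 'M[R]_m)
  (p q : DEA R n m) : R :=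
  p.1.1.1 * q.1.2 + q.1.1.1 * p.1.2 + bform B p.1.1.2 q.1.1.2
  + bform Ba p.2 q.2.

Definition derivation (R : realType) (V : vectType R) (br : V -> V -> V)
  (D : V -> V) : Prop :=
  forall u v, D (br u v) = br (D u) v + br u (D v).

Definition skew_wrt (R : realType) (V : vectType R) (q : V -> V -> R)
  (D : V -> V) : Prop :=
  forall u v, q (D u) v + q u (D v) = 0.

Definition ksymplectic (R : realType) (V : vectType R) (br : V -> V -> V)
  (k : nat) : Prop :=
  (0 < k)%N /\
  exists N : nat, (0 < N)%N /\ \dim (fullv : {vspace V}) = (N * k.+1)%N /\
  exists h : {vspace V},
    (forall u v, u \in h -> v \in h -> br u v \in h) /\
    \dim h = (N * k)%N /\
    exists theta : 'I_k -> V -> V -> R,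
      (forall i a u v w, theta i (a *: u + v) w = a * theta i u w + theta i v w) /\
      (forall i a u v w, theta i w (a *: u + v) = a * theta i w u + theta i w v) /\
      (forall i u v, theta i u v = - theta i v u) /\
      (forall u, (forall i v, theta i u v = 0) -> u = 0) /\
      (forall i u v w,
         theta i (br u v) w + theta i (br v w) u + theta i (br w u) v = 0) /\
      (forall i u v, u \in h -> v \in h -> theta i u v = 0).

(* Main.v *)
Require Import Defs.
From mathcomp Require Import all_boot all_order all_algebra.
From mathcomp Require Import reals.
From mathcomp Require Import ring lra.
Set Implicit Arguments. Unset Strict Implicit. Unset Printing Implicit Defensive.
Import Order.TTheory GRing.Theory Num.Theory.
Local Open Scope ring_scope.

Lemma horner_mx_sumE (R : comNzRingType) n (A : 'M[R]_n.+1) (p : {poly R}) :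
  horner_mx A p = \sum_(i < size p) p`_i *: A ^+ i.
Proof.
rewrite -{1}[p]coefK poly_def raddf_sum; apply: eq_bigr => i _.
change (horner_mx A (p`_i *: 'X^i) = p`_i *: A ^+ i).
rewrite -mul_polyC rmorphM /= horner_mx_C rmorphXn /= horner_mx_X.
by rewrite -mulmxE mul_scalar_mx.
Qed.

Lemma key_nil (R : realType) n (M A : 'M[R]_n) (l : R) :
  M * A - A * M = l *: A -> l != 0 -> exists k, A ^+ k = 0.
Proof.
case: n M A => [|n] M A hMA l0.
  by exists 0%N; apply/matrixP => -[].
pose p := char_poly A.
pose S (c : nat -> R) := \sum_(i < n.+2) c i *: A ^+ i.
have hk : forall k, M * A ^+ k - A ^+ k * M = (l * k%:R) *: A ^+ k.
  elim=> [|k IH]; first by rewrite !expr0 mulr1 mul1r subrr mulr0 scale0r.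
  have -> : M * A ^+ k.+1 - A ^+ k.+1 * M =
     (M * A - A * M) * A ^+ k + A * (M * A ^+ k - A ^+ k * M).
    rewrite {1}exprS exprSr.
    by rewrite !mulrBl !mulrBr !mulrA -exprSr exprS ?mulrA addrA subrK.
  rewrite hMA IH -scalerAl -scalerAr -exprS -scalerDl; congr (_ *: _).
  by rewrite mulrSr mulrDr mulr1 addrC.
have hS : forall c, M * S c - S c * M = l *: S (fun i => i%:R * c i).
  move=> c; rewrite /S mulr_sumr mulr_suml -sumrB scaler_sumr.
  apply: eq_bigr => i _; rewrite -scalerAr -scalerAl -scalerBr hk.
  by rewrite !scalerA mulrC -mulrA.
have S0 : S (fun i => p`_i) = 0.
  rewrite -(Cayley_Hamilton A) horner_mx_sumE size_char_poly /S.
  by [].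
have Sj : forall j, S (fun i => (i ^_ j)%:R * p`_i) = 0.
  elim=> [|j IH].
    by rewrite -S0 /S; apply: eq_bigr => i _; rewrite ffactn0 mul1r.
  have : S (fun i => i%:R * ((i ^_ j)%:R * p`_i)) - j%:R *: S (fun i => (i ^_ j)%:R * p`_i) = 0.
    have := hS (fun i => (i ^_ j)%:R * p`_i).
    rewrite IH mulr0 mul0r subrr => /esym /eqP.
    rewrite scaler_eq0 (negbTE l0) /= => /eqP ->.
    by rewrite scaler0 subrr.
  move=> <-; rewrite /S scaler_sumr -sumrB; apply: eq_bigr => i _.
  rewrite scalerA -scalerBl; congr (_ *: _).
  rewrite ffactnSr natrM.
  case: (leqP j i) => hji; first by rewrite natrB // -mulrBl mulrA [_ * (_ - _)]mulrC.
  by rewrite ffact_small // !mul0r !mulr0 subrr.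
have := Sj n.+1.
rewrite /S big_ord_recr /= big1 ?add0r; last first.
  by move=> i _; rewrite ffact_small // mul0r scale0r.
rewrite ffactnn.
have -> : p`_n.+1 = 1.
  have := char_poly_monic A; rewrite monicE /lead_coef size_char_poly.
  by move/eqP.
rewrite mulr1 => /eqP; rewrite scaler_eq0 pnatr_eq0 gtn_eqF ?fact_gt0 //= => /eqP h.
by exists n.+1.
Qed.
Lemma nil3 (R : comNzRingType) n (y z : 'rV[R]_n) (C : 'M[R]_n) :
  C^T = C ->
  (z^T *m y - y^T *m z) *m C *m z^T = 0 ->
  let N := (z^T *m y - y^T *m z) *m C in N *m N *m N = 0.
Proof.
move=> hC; set P := _ - _ => h N.
have PT : P^T = - P by rewrite /P linearB /= !trmx_mul !trmxK opprB.
have zCP : z *m C *m P = 0.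
  apply: trmx_inj; rewrite !trmx_mul PT hC trmx0 mulNmx mulmxA h.
  by rewrite oppr0.
have PCP : P *m C *m P = - (P *m C *m y^T *m z).
  by rewrite {3}/P mulmxBr !mulmxA h mul0mx sub0r.
by rewrite /N !mulmxA PCP !mulNmx -(mulmxA _ z) -(mulmxA _ (z *m C)) zCP mulmx0 mul0mx oppr0.
Qed.

Lemma DEA_eq (R : realType) n m (p q : DEA R n m) :
  p.1.1.1 = q.1.1.1 -> p.1.1.2 = q.1.1.2 -> p.1.2 = q.1.2 -> p.2 = q.2 -> p = q.
Proof. by case: p => [[[? ?] ?] ?]; case: q => [[[? ?] ?] ?] /= -> -> -> ->. Qed.

Definition gE (R : realType) n m (u : 'rV[R]_n) : DEA R n m := (0, u, 0, 0).
Definition bE (R : realType) n m : DEA R n m := (0, 0, 1, 0).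
Definition aE (R : realType) n m (c : 'rV[R]_m) : DEA R n m := (0, 0, 0, c).

Lemma scaleRo (R : realType) (a x : R) : a *: (x : R^o) = a * x.
Proof. by []. Qed.

Lemma decomp (R : realType) n m (q : DEA R n m) :
  q = q.1.1.1 *: de_e R n m + gE m q.1.1.2 + q.1.2 *: bE R n m + aE n q.2.
Proof.
case: q => [[[x u] xb] c]; apply: DEA_eq => /=; rewrite ?scaleRo;
  by rewrite ?mulr0 ?mulr1 ?scaler0 ?add0r ?addr0.
Qed.

Lemma gE_lin (R : realType) n m (a : R) (u v : 'rV[R]_n) :
  gE m (a *: u + v) = a *: gE m u + gE m v.
Proof. by apply: DEA_eq => /=; rewrite ?scaleRo ?mulr0 ?scaler0 ?addr0. Qed.

Lemma bform_linl (R : realType) n (B : 'M[R]_n) a u v w :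
  bform B (a *: u + v) w = a * bform B u w + bform B v w.
Proof. by rewrite /bform !mulmxDl -!scalemxAl !mxE. Qed.

Lemma bform_linr (R : realType) n (B : 'M[R]_n) a u v w :
  bform B w (a *: u + v) = a * bform B w u + bform B w v.
Proof. by rewrite /bform linearD linearZ /= mulmxDr -scalemxAr !mxE. Qed.

Lemma bform_sym (R : realType) n (B : 'M[R]_n) u v :
  B^T = B -> bform B u v = bform B v u.
Proof.
move=> hB; rewrite /bform.
have -> : u *m B *m v^T = (v *m B *m u^T)^T by rewrite !trmx_mul trmxK hB mulmxA.
by rewrite mxE.
Qed.

Lemma bform_dd (R : realType) n (X : 'M[R]_n) i j :
  bform X (delta_mx 0 i) (delta_mx 0 j) = X i j.
Proof. by rewrite /bform -rowE trmx_delta -colE !mxE. Qed.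

Lemma bform_row (R : realType) n (X : 'M[R]_n) u j :
  bform X u (delta_mx 0 j) = (u *m X) 0 j.
Proof. by rewrite /bform trmx_delta -colE !mxE. Qed.

Lemma lin_rep (R : realType) n (phi : 'rV[R]_n -> R) :
  (forall a u v, phi (a *: u + v) = a * phi u + phi v) ->
  forall u, phi u = \sum_j u 0 j * phi (delta_mx 0 j).
Proof.
move=> hl u.
have p0 : phi 0 = 0.
  by have := hl (-1) 0 0; rewrite scaler0 addr0 mulN1r addNr.
have pD : {morph phi : x y / x + y >-> x + y}.
  by move=> x y; have := hl 1 x y; rewrite scale1r mul1r.
rewrite {1}(row_sum_delta u) (big_morph phi pD p0); apply: eq_bigr => j _.
by have := hl (u 0 j) (delta_mx 0 j) 0; rewrite addr0 p0 addr0.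
Qed.

Lemma br_e_l (R : realType) n m (B A : 'M[R]_n) (q : DEA R n m) :
  dbr B A (de_e R n m) q = 0.
Proof.
apply: DEA_eq => //=; rewrite ?mul0mx ?scale0r ?scaler0 ?subr0 //.
by rewrite /bform !mul0mx mxE.
Qed.

Lemma br_e_r (R : realType) n m (B A : 'M[R]_n) (q : DEA R n m) :
  dbr B A q (de_e R n m) = 0.
Proof.
apply: DEA_eq => //=; rewrite ?mul0mx ?scale0r ?scaler0 ?subr0 //.
by rewrite /bform trmx0 !mulmx0 mxE.
Qed.

Lemma br_gg (R : realType) n m (B A : 'M[R]_n) u v :
  dbr B A (gE m u) (gE m v) = bform B (u *m A) v *: de_e R n m.
Proof.
apply: DEA_eq => //=; rewrite ?scaleRo ?mulr1 ?mulr0 ?scaler0 ?scale0r ?subr0 //.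
Qed.

Lemma br_bg (R : realType) n m (B A : 'M[R]_n) u :
  dbr B A (bE R n m) (gE m u) = gE m (u *m A).
Proof.
apply: DEA_eq => //=; rewrite ?scale1r ?scale0r ?subr0 ?mul0mx //.
by rewrite /bform !mul0mx mxE.
Qed.

Lemma br_gb (R : realType) n m (B A : 'M[R]_n) u :
  dbr B A (gE m u) (bE R n m) = gE m (- (u *m A)).
Proof.
apply: DEA_eq => //=; rewrite ?scale1r ?scale0r ?sub0r //.
by rewrite /bform trmx0 !mulmx0 mxE.
Qed.

Lemma br_ga (R : realType) n m (B A : 'M[R]_n) u c :
  dbr B A (gE m u) (aE n c) = 0.
Proof.
apply: DEA_eq => //=; rewrite ?scale1r ?scale0r ?subr0 //.
by rewrite /bform trmx0 !mulmx0 mxE.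
Qed.

Lemma br_ag (R : realType) n m (B A : 'M[R]_n) u c :
  dbr B A (aE n c) (gE m u) = 0.
Proof.
apply: DEA_eq => //=; rewrite ?scale1r ?scale0r ?subr0 //.
by rewrite /bform !mul0mx mxE.
Qed.

Lemma G (R : realType) n m (B A : 'M[R]_n) (th : DEA R n m -> DEA R n m -> R) :
  quad_mx B -> so_mx B A -> (forall k : nat, A ^+ k != 0) ->
  (forall a u v w, th (a *: u + v) w = a * th u w + th v w) ->
  (forall a u v w, th w (a *: u + v) = a * th w u + th w v) ->
  (forall u v, th u v = - th v u) ->
  (forall u v w, th (dbr B A u v) w + th (dbr B A v w) u + th (dbr B A w u) v = 0) ->
  forall q, th (de_e R n m) q = 0.
Proof.
move=> [hBT hBu] hso hnil hl hr hsk hco.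
have th0l : forall w, th 0 w = 0.
  by move=> w; have := hl (-1) 0 0 w; rewrite scaler0 addr0 mulN1r addNr.
have thZl : forall a u w, th (a *: u) w = a * th u w.
  by move=> a u w; have := hl a u 0 w; rewrite addr0 th0l addr0.
have th0r : forall w, th w 0 = 0.
  by move=> w; rewrite hsk th0l oppr0.
have thDr : forall u v w, th w (u + v) = th w u + th w v.
  by move=> u v w; have := hr 1 u v w; rewrite scale1r mul1r.
have thZr : forall a u w, th w (a *: u) = a * th w u.
  by move=> a u w; have := hr a u 0 w; rewrite addr0 th0r addr0.
pose e := de_e R n m.
pose f q := th e q.
have fbr : forall v w, f (dbr B A v w) = 0.
  move=> v w; have := hco e v w; rewrite br_e_l br_e_r !th0l add0r addr0 => h.
  by rewrite /f hsk h oppr0.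
have fe : f e = 0.
  by have := hsk e e; rewrite /f; lra.
pose om u v := bform B (u *m A) v.
have omdd : forall i j, om (delta_mx 0 i) (delta_mx 0 j) = (A *m B) i j.
  by move=> i j; rewrite /om bform_row -mulmxA -rowE !mxE.
have AB0 : A *m B != 0.
  apply: contra (hnil 1%N) => /eqP h; apply/eqP.
  by rewrite expr1 -[A]mulmx1 -(mulmxV hBu) mulmxA h mul0mx.
have /existsP [i0 /existsP [j0 hij]] : [exists i, exists j, (A *m B) i j != 0].
  case: (boolP [exists i, exists j, (A *m B) i j != 0]) => // /existsPn h.
  case/negP: AB0; apply/eqP/matrixP => i j.
  by move/existsPn: (h i) => /(_ j) /negPn /eqP ->; rewrite mxE.
rewrite -omdd in hij.
have fa : forall c, f (aE n c) = 0.
  move=> c; have := hco (gE m (delta_mx 0 i0)) (gE m (delta_mx 0 j0)) (aE n c).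
  rewrite br_gg br_ga br_ag !th0l !addr0 thZl => /eqP.
  by rewrite mulf_eq0 (negbTE hij) /= => /eqP.
have omsk : forall u v, om u v = - om v u.
  move=> u v; apply/eqP; rewrite -addr_eq0; apply/eqP.
  by rewrite /om [bform B (v *m A) u]bform_sym // hso.
pose phi w := f (gE m w).
have phil : forall a u v, phi (a *: u + v) = a * phi u + phi v.
  by move=> a u v; rewrite /phi /f gE_lin hr.
pose z := \row_j phi (delta_mx 0 j).
have phiE : forall w, phi w = (w *m z^T) 0 0.
  by move=> w; rewrite (lin_rep phil) mxE; apply: eq_bigr => j _; rewrite !mxE.
have Az : A *m z^T = 0.
  apply/matrixP => i k; rewrite (ord1 k) [RHS]mxE.
  have := fbr (bE R n m) (gE m (delta_mx 0 i)); rewrite br_bg => h.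
  have : phi (delta_mx 0 i *m A) = 0 by [].
  by rewrite phiE -mulmxA -rowE mxE.
have phi0 : forall w, phi w = 0.
  move=> w; set s := phi w; pose y := w *m A *m B.
  have hM : s *: (A *m B) = z^T *m y - y^T *m z.
    have colrow : forall (p q : 'rV[R]_n) i j, (p^T *m q) i j = p 0 i * q 0 j.
      by move=> p q i j; rewrite mxE big_ord1 !mxE.
    have ezi : forall i, th (de_e R n m) (gE m (delta_mx 0 i)) = z 0 i.
      by move=> i; rewrite mxE.
    apply/matrixP => i j; rewrite mxE [RHS]mxE [X in _ + X]mxE !colrow.
    have := hco (gE m (delta_mx 0 i)) (gE m (delta_mx 0 j)) (gE m w).
    rewrite !br_gg !thZl -/(om _ _) -/(om _ _) -/(om _ _).
    rewrite [om (delta_mx 0 j) w]omsk omdd /om !bform_row -/y !ezi.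
    change (th (de_e R n m) (gE m w)) with s.
    move=> h; set X := (A *m B) i j.
    transitivity (s * X - (X * s + - y 0 j * z 0 i + y 0 i * z 0 j)).
      by rewrite h subr0.
    ring.
  have hCT : (invmx B)^T = invmx B by rewrite trmx_inv hBT.
  have hN : s *: A = (z^T *m y - y^T *m z) *m invmx B.
    by rewrite -hM -scalemxAl -mulmxA mulmxV // mulmx1.
  have Nz : (z^T *m y - y^T *m z) *m invmx B *m z^T = 0.
    by rewrite -hN -scalemxAl Az scaler0.
  have := nil3 hCT Nz; rewrite /= -hN; do 3!rewrite -?scalemxAl -?scalemxAr; rewrite !scalerA.
  have -> : A *m A *m A = A ^+ 3 by rewrite !exprS expr0 mulr1 !mulmxE mulrA.
  move/eqP; rewrite scaler_eq0 (negbTE (hnil 3%N)) orbF !mulf_eq0.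
  by rewrite !orbb => /eqP.
pose T := \matrix_(i, j) th (gE m (delta_mx 0 i)) (gE m (delta_mx 0 j)).
have thgg : forall u v, th (gE m u) (gE m v) = bform T u v.
  move=> u v.
  have h1 : forall a x y, th (gE m u) (gE m (a *: x + y)) =
                        a * th (gE m u) (gE m x) + th (gE m u) (gE m y).
    by move=> a x y; rewrite gE_lin hr.
  rewrite (lin_rep h1) /bform mxE; apply: eq_bigr => k _.
  have h2 : forall a x y, th (gE m (a *: x + y)) (gE m (delta_mx 0 k)) =
                        a * th (gE m x) (gE m (delta_mx 0 k)) + th (gE m y) (gE m (delta_mx 0 k)).
    by move=> a x y; rewrite gE_lin hl.
  rewrite (lin_rep h2) !mxE mulrC; congr (_ * _).
  by apply: eq_bigr => l _; rewrite !mxE.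
have bfT : forall (X : 'M[R]_n) u v, bform X u (v *m A) = bform (X *m A^T) u v.
  by move=> X u v; rewrite /bform trmx_mul !mulmxA.
have bfN : forall (X : 'M[R]_n) u v, bform X (- u) v = - bform X u v.
  by move=> X u v; rewrite /bform !mulNmx mxE.
pose lam := f (bE R n m).
have hTA : A *m T + T *m A^T = - lam *: (A *m B).
  apply/matrixP => i j; rewrite mxE [RHS]mxE.
  have := hco (bE R n m) (gE m (delta_mx 0 i)) (gE m (delta_mx 0 j)).
  rewrite br_bg br_gg br_gb !thgg thZl -/(om _ _) omdd bfN.
  rewrite -/lam bform_row -mulmxA -rowE mxE.
  rewrite -[bform T (delta_mx 0 j *m A) _]thgg [th (gE m (_ *m A)) _]hsk thgg bfT bform_dd.
  change (th (de_e R n m) (bE R n m)) with lam.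
  by move=> h; rewrite -[LHS]subr0 -h; ring.
have hABs : A *m B = - (B *m A^T).
  apply/eqP; rewrite -addr_eq0; apply/eqP/matrixP => i j.
  have := hso (delta_mx 0 i) (delta_mx 0 j).
  rewrite bfT bform_dd -/(om _ _) omdd => h.
  by rewrite [LHS]mxE h mxE.
pose C := invmx B.
have hCA : C *m A = - (A^T *m C).
  have -> : C *m A = C *m (A *m B) *m C by rewrite -!mulmxA mulmxV // mulmx1.
  by rewrite hABs mulmxN mulNmx mulmxA mulVmx // mul1mx.
have hMA : (T *m C) * A - A * (T *m C) = lam *: A.
  rewrite -!mulmxE -mulmxA hCA mulmxN !mulmxA -opprD addrC -mulmxDl hTA.
  by rewrite -scalemxAl -mulmxA mulmxV // mulmx1 scaleNr opprK.
have lam0 : lam = 0.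
  case: (eqVneq lam 0) => // hl0.
  have [k hk] := key_nil hMA hl0.
  by move: (hnil k); rewrite hk eqxx.
move=> q; rewrite (decomp q) !thDr !thZr.
have -> : th (de_e R n m) (gE m q.1.1.2) = 0 by apply: phi0.
have := fa q.2; have := fe; rewrite /f => -> ->.
by change (th (de_e R n m) (bE R n m)) with lam; rewrite lam0 !mulr0 !addr0.
Qed.

Lemma dform_linl (R : realType) n m (B : 'M[R]_n) (Ba : 'M[R]_m) a (u v w : DEA R n m) :
  dform B Ba (a *: u + v) w = a * dform B Ba u w + dform B Ba v w.
Proof. rewrite /dform /= !bform_linl !scaleRo; ring. Qed.

Lemma dform_linr (R : realType) n m (B : 'M[R]_n) (Ba : 'M[R]_m) a (u v w : DEA R n m) :
  dform B Ba w (a *: u + v) = a * dform B Ba w u + dform B Ba w v.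
Proof. rewrite /dform /= !bform_linr !scaleRo; ring. Qed.

Lemma dform_sym (R : realType) n m (B : 'M[R]_n) (Ba : 'M[R]_m) (u v : DEA R n m) :
  B^T = B -> Ba^T = Ba -> dform B Ba u v = dform B Ba v u.
Proof.
move=> hB hBa; rewrite /dform (bform_sym _ _ hB) (bform_sym _ _ hBa).
by rewrite (addrC (u.1.1.1 * _)).
Qed.

Lemma bform_N (R : realType) n (B : 'M[R]_n) u v : bform B (- u) v = - bform B u v.
Proof. by rewrite /bform !mulNmx mxE. Qed.

Lemma bform_Nr (R : realType) n (B : 'M[R]_n) u v : bform B v (- u) = - bform B v u.
Proof. by rewrite /bform linearN /= mulmxN mxE. Qed.

Lemma bform_Z (R : realType) n (B : 'M[R]_n) a u v : bform B (a *: u) v = a * bform B u v.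
Proof. by rewrite /bform -!scalemxAl [LHS]mxE. Qed.

Lemma bform_Zr (R : realType) n (B : 'M[R]_n) a u v : bform B v (a *: u) = a * bform B v u.
Proof. by rewrite /bform linearZ /= -!scalemxAr [LHS]mxE. Qed.

Lemma bform_Br (R : realType) n (B : 'M[R]_n) u u' v : bform B v (u - u') = bform B v u - bform B v u'.
Proof. by rewrite -[u]scale1r bform_linr bform_Nr scale1r mul1r. Qed.

Lemma bform_Bl (R : realType) n (B : 'M[R]_n) u u' v : bform B (u - u') v = bform B u v - bform B u' v.
Proof. by rewrite -[u]scale1r bform_linl bform_N scale1r mul1r. Qed.

Lemma dform_inv (R : realType) n m (B A : 'M[R]_n) (Ba : 'M[R]_m) (p q r : DEA R n m) :
  B^T = B -> so_mx B A ->
  dform B Ba (dbr B A p q) r = dform B Ba p (dbr B A q r).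
Proof.
move=> hB hso; rewrite /dform /=.
have b0l : forall k (X : 'M[R]_k) v, bform X 0 v = 0.
  by move=> k X v; rewrite /bform !mul0mx mxE.
have b0r : forall k (X : 'M[R]_k) v, bform X v 0 = 0.
  by move=> k X v; rewrite /bform trmx0 mulmx0 mxE.
rewrite !b0l !b0r !mulr0 !addr0.
rewrite bform_Bl bform_Br !bform_Z !bform_Zr.
have s1 : bform B p.1.1.2 (r.1.1.2 *m A) = - bform B (p.1.1.2 *m A) r.1.1.2.
  by apply/eqP; rewrite -addr_eq0 addrC hso.
have s2 : bform B p.1.1.2 (q.1.1.2 *m A) = - bform B (p.1.1.2 *m A) q.1.1.2.
  by apply/eqP; rewrite -addr_eq0 addrC hso.
rewrite s1 s2; ring.
Qed.

Lemma dbr_anti (R : realType) n m (B A : 'M[R]_n) (p q : DEA R n m) :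
  B^T = B -> so_mx B A -> dbr B A q p = - dbr B A p q.
Proof.
move=> hB hso; apply: DEA_eq => /=; rewrite ?oppr0 //.
  apply/eqP; rewrite -addr_eq0 bform_sym // addrC; apply/eqP; exact: hso.
by rewrite opprB.
Qed.

Lemma bform_nondeg (R : realType) n (B : 'M[R]_n) (u : 'rV[R]_n) :
  B \in unitmx -> (forall j, bform B u (delta_mx 0 j) = 0) -> u = 0.
Proof.
move=> hB h; have uB : u *m B = 0.
  by apply/matrixP => i j; rewrite (ord1 i) -bform_row h mxE.
by rewrite -[u]mulmx1 -(mulmxV hB) mulmxA uB mul0mx.
Qed.

Lemma dform_nondeg (R : realType) n m (B : 'M[R]_n) (Ba : 'M[R]_m) (d : DEA R n m) :
  B \in unitmx -> Ba \in unitmx -> (forall q, dform B Ba d q = 0) -> d = 0.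
Proof.
move=> hB hBa h.
have b0r : forall k (X : 'M[R]_k) v, bform X v 0 = 0.
  by move=> k X v; rewrite /bform trmx0 mulmx0 mxE.
apply: DEA_eq => /=.
- by have := h (bE R n m); rewrite /dform /= !b0r mulr1 mul0r !addr0.
- apply: (@bform_nondeg R n B d.1.1.2 hB) => j; have := h (gE m (delta_mx 0 j)).
  by rewrite /dform /= b0r mulr0 mul0r !add0r addr0.
- by have := h (de_e R n m); rewrite /dform /= !b0r mulr0 mul1r !addr0 add0r.
- apply: (@bform_nondeg R m Ba d.2 hBa) => j; have := h (aE n (delta_mx 0 j)).
  by rewrite /dform /= b0r mulr0 mul0r !add0r.
Qed.

Lemma cocycle_of (R : realType) n m (B A : 'M[R]_n) (Ba : 'M[R]_m)
  (D : {linear DEA R n m -> DEA R n m}) :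
  quad_mx B -> quad_mx Ba -> so_mx B A ->
  derivation (@dbr R n m B A) D -> skew_wrt (@dform R n m B Ba) D ->
  forall u v w,
    dform B Ba (D (dbr B A u v)) w + dform B Ba (D (dbr B A v w)) u
    + dform B Ba (D (dbr B A w u)) v = 0.
Proof.
move=> [hB _] [hBa _] hso hder hsk u v w.
have qD : forall a b c, dform B Ba (a + b) c = dform B Ba a c + dform B Ba b c.
  by move=> a b c; have := dform_linl B Ba 1 a b c; rewrite scale1r mul1r.
have qNl : forall a c, dform B Ba (- a) c = - dform B Ba a c.
  move=> a c; have q0 : dform B Ba 0 c = 0.
    by have := qD 0 0 c; rewrite addr0; lra.
  by have := qD a (- a) c; rewrite subrr q0; lra.
have qS : forall a b, dform B Ba a b = dform B Ba b a by move=> a b; apply: dform_sym.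
have qNr : forall a c, dform B Ba c (- a) = - dform B Ba c a by move=> a c; rewrite qS qNl qS.
have qI : forall a b c, dform B Ba (dbr B A a b) c = dform B Ba a (dbr B A b c) by move=> a b c; apply: dform_inv.
have qK : forall a b, dform B Ba (D a) b = - dform B Ba a (D b).
  by move=> a b; apply/eqP; rewrite -addr_eq0; apply/eqP; apply: hsk.
have ant : forall a b : DEA R n m, dbr B A b a = - dbr B A a b.
  by move=> a b; apply: dbr_anti.
have t1 : dform B Ba (D (dbr B A u v)) w = - dform B Ba (D (dbr B A v w)) u - dform B Ba (D (dbr B A w u)) v.
  rewrite hder qD qI qK qS; congr (_ + _).
  rewrite qI ant qNr -qI ant qNl opprK qS qK qS.
  done.
rewrite t1; ring.
Qed.

Theorem mainTheorem8 (R : realType) (n m : nat)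
  (B A : 'M[R]_n) (Ba : 'M[R]_m) :
  quad_mx B -> quad_mx Ba -> so_mx B A ->
  (forall k : nat, A ^+ k != 0) ->
  (forall D : {linear DEA R n m -> DEA R n m},
     derivation (@dbr R n m B A) D ->
     skew_wrt (@dform R n m B Ba) D ->
     D (de_e R n m) = 0) /\
  (forall k : nat, (0 < k)%N -> ~ ksymplectic (@dbr R n m B A) k).
Proof.
move=> hq hqa hso hnil; split.
  move=> D hder hsk.
  have [hB hBu] := hq; have [hBa hBau] := hqa.
  apply: (dform_nondeg hBu hBau).
  apply: (@G R n m B A (fun p q => dform B Ba (D p) q)) => //.
  - by move=> a u v w; rewrite linearP dform_linl.
  - by move=> a u v w; rewrite dform_linr.
  - move=> u v; rewrite dform_sym //; apply/eqP; rewrite -addr_eq0 addrC.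
    by apply/eqP; apply: hsk.
  - exact: cocycle_of.
move=> k hk [_ [N [_ [_ [h [_ [_ [theta [l1 [l2 [sk [ker [coc _]]]]]]]]]]]]].
have e0 : de_e R n m = 0.
  apply: ker => i v.
  exact: (@G R n m B A (theta i) hq hso hnil (l1 i) (l2 i) (sk i) (coc i)).
have : (de_e R n m).1.1.1 = 0 by rewrite e0.
by move=> /eqP; rewrite oner_eq0.
Qed.
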